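(* If $\psi \in \mathcal{D}^1$, then for each $i=1,\dots,I$ and every $u\in\mathbb{R}_+$, \[i\, \psi_i'(u)=\sum_{j=1}^{I}M_{ij}^*(\psi'(u))\,v^{\mathrm{eff}}_j(\psi'(u))\, \psi_j'(u),\] where $\psi'(u)=(\psi_1'(u),\dots,\psi_I'(u))$.
   Context: Fix $I\in\mathbb{N}$. $\mathcal{C}=\{f\in C(\mathbb{R}_+,\mathbb{R}_+):f(0)=0,f\text{ non-decreasing}\}$, $\mathcal{C}^\uparrow=\{f\in\mathcal{C}:f\text{ strictly increasing},\lim_{u\to\infty}f(u)=\infty\}$, $\mathcal{C}^1=\{f\in\mathcal{C}:f^{\mathbb{R}}\in C^1(\mathbb{R},\mathbb{R})\}$ where $f^{\mathbb{R}}$ extends $f$ by $0$ on $(-\infty,0)$. For $\psi\in\mathcal{C}^I$, $\phi_i(u)=u-\sum_j2(i\wedge j)\psi_j(u)$; $\mathcal{D}=\{\psi\in\mathcal{C}^I:\phi_I\in\mathcal{C}^\uparrow,\sum_ii\sup_{u_1\ne u_2}\frac{\psi_i(u_1)-\psi_i(u_2)}{\phi_i(u_1)-\phi_i(u_2)}<\frac12\}$ and $\mathcal{D}^1=\mathcal{D}\cap(\mathcal{C}^1)^I$. With $\kappa_{ij}=2(i\wedge j)$, for $\rho\in\mathbb{R}_+^I$ let $M(\rho)$ have $M_{ii}=1-\sum_{j\neq i}\kappa_{ij}\rho_j$, $M_{ij}=\kappa_{ij}\rho_j$ ($i\neq j$), and $M^*(\rho)$ have $M^*_{ii}=1-\sum_{j\ne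 i}\kappa_{ij}\rho_j$, $M^*_{ij}=\kappa_{ij}\rho_i$ ($i\neq j$). When $\sum_i2i\rho_i<1$, $M(\rho)$ is invertible and $v^{\mathrm{eff}}(\rho):=M(\rho)^{-1}(1,2,\dots,I)^T$ (for $\psi\in\mathcal{D}^1$ this condition holds for $\rho=\psi'(u)$). *)

(* Defs.v *)
From HB Require Import structures.
From mathcomp Require Import all_boot all_order all_algebra.
From mathcomp Require Import all_classical all_reals all_analysis.
Set Implicit Arguments. Unset Strict Implicit. Unset Printing Implicit Defensive.
Import Order.TTheory GRing.Theory Num.Theory.
Import numFieldNormedType.Exports.
Local Open Scope classical_set_scope.
Local Open Scope ring_scope.

Section Defs.
Variable R : realType.

(* Functions R_+ -> R_+ are represented as f : R -> R; only values on [0,oo) matter. *)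

Definition classC (f : R -> R) : Prop :=
  [/\ {within `[0, +oo[, continuous f},
      f 0 = 0,
      (forall u, 0 <= u -> 0 <= f u) &
      (forall u1 u2, 0 <= u1 -> u1 <= u2 -> f u1 <= f u2)].

Definition classCup (f : R -> R) : Prop :=
  [/\ classC f,
      (forall u1 u2, 0 <= u1 -> u1 < u2 -> f u1 < f u2) &
      f x @[x --> +oo] --> +oo].

Definition extR (f : R -> R) : R -> R := fun u => if u < 0 then 0 else f u.

Definition classC1 (f : R -> R) : Prop :=
  [/\ classC f,
      (forall x, derivable (extR f) x 1) &
      continuous (derive1 (extR f))].

Definition dpsi (I : nat) (psi : 'I_I -> R -> R) (u : R) : 'I_I -> R :=
  fun i => derive1 (extR (psi i)) u.

(* kappa_{kl} = 2 (k /\ l) with 1-based indices k, l *)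
Definition kappa (k l : nat) : R := 2 * (minn k l)%:R.

(* phi_k(u) = u - sum_j 2 (k /\ j) psi_j(u), k 1-based; psi j is psi_{j+1} *)
Definition phi (I : nat) (psi : 'I_I -> R -> R) (k : nat) (u : R) : R :=
  u - \sum_(j < I) kappa k j.+1 * psi j u.

Definition ratio_sup (I : nat) (psi : 'I_I -> R -> R) (i : 'I_I) : \bar R :=
  ereal_sup [set x : \bar R | exists u1 u2, [/\ 0 <= u1, 0 <= u2, u1 != u2 &
      x = ((psi i u1 - psi i u2) / (phi psi i.+1 u1 - phi psi i.+1 u2))%:E]].

Definition classD (I : nat) (psi : 'I_I -> R -> R) : Prop :=
  [/\ (forall i, classC (psi i)),
      classCup (phi psi I) &
      (\sum_(i < I) (i.+1)%:R%:E * ratio_sup psi i < (1 / 2)%:E)%E].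

Definition classD1 (I : nat) (psi : 'I_I -> R -> R) : Prop :=
  classD psi /\ (forall i, classC1 (psi i)).

(* M(rho) and M^*(rho), indices i j : 'I_I stand for i+1, j+1 *)
Definition Mmat (I : nat) (rho : 'I_I -> R) : 'M[R]_I :=
  \matrix_(i, j) if i == j then 1 - \sum_(k < I | k != i) kappa i.+1 k.+1 * rho k
                 else kappa i.+1 j.+1 * rho j.

Definition Mstar (I : nat) (rho : 'I_I -> R) : 'M[R]_I :=
  \matrix_(i, j) if i == j then 1 - \sum_(k < I | k != i) kappa i.+1 k.+1 * rho k
                 else kappa i.+1 j.+1 * rho i.

Definition veff (I : nat) (rho : 'I_I -> R) : 'cV[R]_I :=
  invmx (Mmat rho) *m \col_(i < I) (i.+1)%:R.

End Defs.

(* Main.v *)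
Require Import Defs.
From HB Require Import structures.
From mathcomp Require Import all_boot all_order all_algebra.
From mathcomp Require Import all_classical all_reals all_analysis.
From mathcomp Require Import lra ring.
Local Open Scope classical_set_scope.
Import Order.TTheory GRing.Theory Num.Theory.
Local Open Scope ring_scope.

Lemma cnt_le (k n : nat) : (k < n)%N -> (\sum_(m < n) (m <= k : nat))%N = k.+1.
Proof.
elim: n => [//|n IH] Hk.
rewrite big_ord_recr /=.
case: (ltnP k n) => Hkn.
  by rewrite IH // addn0.
have -> : k = n by apply/eqP; rewrite eqn_leq Hkn -ltnS Hk.
rewrite addn1; congr _.+1.
rewrite (eq_bigr (fun _ => 1%N)); last by move=> m _; rewrite (ltnW (ltn_ord m)).
by rewrite sum_nat_const card_ord muln1.
Qed.

Lemma kappa_sum (R : realType) (I : nat) (i j : 'I_I) :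
  kappa R i.+1 j.+1 = 2 * \sum_(m < I) ((m <= i)%N%:R * (m <= j)%N%:R).
Proof.
rewrite /kappa minnSS.
have Hmn : (minn i j < I)%N by rewrite gtn_min ltn_ord.
rewrite -(@cnt_le _ _ Hmn) natr_sum; congr (_ * _); apply: eq_bigr => m _.
by rewrite leq_min; case: (m <= i)%N; case: (m <= j)%N; rewrite ?mulr1 ?mulr0.
Qed.

Lemma quad_ge0 (R : realType) (I : nat) (y : 'I_I -> R) :
  0 <= \sum_(i < I) \sum_(j < I) y i * kappa R i.+1 j.+1 * y j.
Proof.
have -> : \sum_(i < I) \sum_(j < I) y i * kappa R i.+1 j.+1 * y j =
   \sum_(m < I) 2 * ((\sum_(i < I) (m <= i)%N%:R * y i) * (\sum_(j < I) (m <= j)%N%:R * y j)).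
  transitivity (\sum_(i < I) \sum_(j < I) \sum_(m < I)
      2 * (((m <= i)%N%:R * y i) * ((m <= j)%N%:R * y j))).
    apply: eq_bigr => i _; apply: eq_bigr => j _.
    rewrite kappa_sum !mulr_sumr mulr_suml; apply: eq_bigr => m _; ring.
  transitivity (\sum_(i < I) \sum_(m < I) \sum_(j < I)
      2 * (((m <= i)%N%:R * y i) * ((m <= j)%N%:R * y j))).
    by apply: eq_bigr => i _; exact: exchange_big.
  rewrite exchange_big /=; apply: eq_bigr => m _.
  rewrite mulr_suml mulr_sumr; apply: eq_bigr => i _.
  by rewrite !mulr_sumr.
apply: sumr_ge0 => m _; apply: mulr_ge0 => //; rewrite -expr2; exact: sqr_ge0.
Qed.

Lemma M_unit (R : realType) (I : nat) (rho : 'I_I -> R) :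
  (forall k, 0 <= rho k) ->
  (forall i : 'I_I, 0 < 1 - \sum_(k < I) kappa R i.+1 k.+1 * rho k) ->
  Mmat rho \in unitmx.
Proof.
move=> rho0 a0.
set a := fun i : 'I_I => 1 - \sum_(k < I) kappa R i.+1 k.+1 * rho k.
rewrite unitmxE unitfE -det_tr; apply/negP => /det0P [v nz vM].
pose x := fun j : 'I_I => (v 0 j : R).
have Heq : forall i, a i * x i + \sum_(j < I) kappa R i.+1 j.+1 * (rho j * x j) = 0.
  move=> i; have := congr1 (fun A : 'M[R]_(1, I) => A 0 i) vM; rewrite !mxE => H; apply: (etrans _ H).
  under [RHS]eq_bigr => j _ do rewrite !mxE.
  rewrite [RHS](bigD1 i) //= [in RHS]eqxx /a /x.
  rewrite [in X in _ + X](bigD1 i) //= [in X in (1 - X) * _](bigD1 i) //=.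
  have -> : \sum_(i0 < I | i0 != i) v 0 i0 *
     (if i == i0 then 1 - \sum_(k < I | k != i) kappa R i.+1 k.+1 * rho k
      else kappa R i.+1 i0.+1 * rho i0) =
     \sum_(i0 < I | i0 != i) kappa R i.+1 i0.+1 * (rho i0 * v 0 i0).
    apply: eq_bigr => j hj; rewrite eq_sym (negbTE hj); ring.
  ring.
pose y := fun j => rho j * x j.
have Htot : \sum_(i < I) a i * rho i * (x i ^+ 2) +
    \sum_(i < I) \sum_(j < I) y i * kappa R i.+1 j.+1 * y j = 0.
  rewrite -big_split big1 // => i _ /=.
  transitivity (y i * (a i * x i + \sum_(j < I) kappa R i.+1 j.+1 * (rho j * x j)));
    last by rewrite Heq mulr0.
  rewrite mulrDr mulr_sumr; congr (_ + _); first by rewrite /y; ring.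
  by apply: eq_bigr => j _; rewrite /y; ring.
have T1nn : forall i, 0 <= a i * rho i * (x i ^+ 2).
  move=> i; apply: mulr_ge0; [apply: mulr_ge0; [exact: ltW (a0 i) | exact: rho0] | exact: sqr_ge0].
have T1ge0 : 0 <= \sum_(i < I) a i * rho i * (x i ^+ 2).
  by apply: sumr_ge0 => i _.
have T1eq0 : \sum_(i < I) a i * rho i * (x i ^+ 2) = 0.
  have := @quad_ge0 R I y; lra.
have Hy : forall i, y i = 0.
  move=> i; have := @psumr_eq0P _ _ _ _ (fun i _ => T1nn i) T1eq0 i isT.
  have := a0 i; rewrite -/(a i) /y => ha hz.
  have hz2 : rho i * x i ^+ 2 = 0.
    by move/eqP: hz; rewrite -mulrA mulf_eq0 (gt_eqF ha) /= => /eqP.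
  apply/eqP; rewrite -sqrf_eq0; apply/eqP.
  by rewrite exprMn expr2 -mulrA hz2 mulr0.
have Hx : forall i, x i = 0.
  move=> i; have := Heq i.
  rewrite big1 ?addr0; last by move=> j _; rewrite -/(y j) Hy mulr0.
  by move/eqP; rewrite mulf_eq0 (gt_eqF (a0 i)) /= => /eqP.
apply/negP: nz; rewrite negbK; apply/eqP/rowP => j; rewrite mxE.
exact: Hx j.
Qed.


Lemma ident (R : realType) (I : nat) (rho : 'I_I -> R) (i : 'I_I) :
  Mmat rho \in unitmx ->
  (i.+1)%:R * rho i = \sum_(j < I) Mstar rho i j * veff rho j 0 * rho j.
Proof.
move=> hu.
have H : Mmat rho *m veff rho = \col_(i < I) (i.+1)%:R by rewrite /veff mulKVmx.
transitivity (rho i * (Mmat rho *m veff rho) i 0); first by rewrite H mxE mulrC.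
rewrite mxE mulr_sumr; apply: eq_bigr => j _; rewrite !mxE.
by case: eqP => [->|_]; ring.
Qed.
Lemma phi_diff (R : realType) (I : nat) (psi : 'I_I -> R -> R) k u1 u2 :
  phi psi k u1 - phi psi k u2 =
  (u1 - u2) - \sum_(j < I) kappa R k j.+1 * (psi j u1 - psi j u2).
Proof.
under [in RHS]eq_bigr => j _ do rewrite mulrBr.
rewrite sumrB /phi; ring.
Qed.

Lemma kappa_ge0 (R : realType) k l : 0 <= kappa R k l.
Proof. by rewrite /kappa mulr_ge0. Qed.

Lemma rho_bounds (R : realType) (I : nat) (psi : 'I_I -> R -> R) :
  classD1 psi -> forall (i : 'I_I) (u : R), 0 <= u ->
  0 <= dpsi psi u i /\ ((dpsi psi u i)%:E <= ratio_sup psi i)%E.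
Proof.
move=> [[hC hup hsum] hC1] i u hu.
have mono : forall j u1 u2, 0 <= u1 -> u1 <= u2 -> psi j u1 <= psi j u2.
  by move=> j; case: (hC j).
pose q h := (psi i (h + u) - psi i u) / (phi psi i.+1 (h + u) - phi psi i.+1 u).
have key : forall h, 0 < h -> [/\ 0 <= h^-1 * (psi i (h + u) - psi i u),
    h^-1 * (psi i (h + u) - psi i u) <= q h & ((q h)%:E <= ratio_sup psi i)%E].
  move=> h hh.
  have hd : forall j, 0 <= psi j (h + u) - psi j u.
    by move=> j; rewrite subr_ge0; apply: mono => //; lra.
  have hPh : phi psi i.+1 (h + u) - phi psi i.+1 u <= h.
    rewrite phi_diff; have : 0 <= \sum_(j < I) kappa R i.+1 j.+1 * (psi j (h + u) - psi j u).
      by apply: sumr_ge0 => j _; apply: mulr_ge0; [exact: kappa_ge0 | exact: hd].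
    lra.
  have hPI : 0 < phi psi I (h + u) - phi psi I u.
    case: hup => _ hs _; rewrite subr_gt0; apply: hs => //; lra.
  have hP : 0 < phi psi i.+1 (h + u) - phi psi i.+1 u.
    apply: (lt_le_trans hPI); rewrite !phi_diff.
    suff : \sum_(j < I) kappa R i.+1 j.+1 * (psi j (h + u) - psi j u) <=
           \sum_(j < I) kappa R I j.+1 * (psi j (h + u) - psi j u) by lra.
    apply: ler_sum => j _; apply: ler_wpM2r; first exact: hd.
    rewrite /kappa ler_pM2l // ler_nat leq_min geq_minr andbT.
    exact: leq_trans (geq_minl _ _) (ltn_ord i).
  split.
  - by apply: mulr_ge0; [rewrite invr_ge0; lra | exact: hd].
  - rewrite /q mulrC; apply: ler_wpM2l; first exact: hd.
    by rewrite lef_pV2 // posrE.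
  - apply: ereal_sup_ubound; exists (h + u), u; split => //; first lra.
    by rewrite -subr_eq0 addrK gt_eqF.
pose f := extR (psi i).
pose g := fun h : R => h^-1 *: (f (h + u) - f u).
have hg : forall h, 0 < h -> g h = h^-1 * (psi i (h + u) - psi i u).
  move=> h hh; rewrite /g /f /extR.
  have -> : (h + u < 0) = false by apply/negbTE; rewrite -leNgt; lra.
  have -> : (u < 0) = false by apply/negbTE; rewrite -leNgt.
  by [].
have cg : cvg (g @ 0^').
  case: (hC1 i) => _ hdv _; move: (hdv u).
  rewrite /derivable.
  set G := (fun h => _ *: _); suff -> : G = g by [].
  apply/funext => h; rewrite /G /g /f /=; congr (_ *: (extR _ _ - _)); rewrite /shift /=; congr (_ + _); exact: mulr1.
have cr : g @ 0^'+ --> derive1 f u.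
  move=> A /cg /nbhs_ballP [_ /posnumP[e] xe_A].
  by exists e%:num => //= y xe_y /gt_eqF/negbT/xe_A; exact.
have dE : dpsi psi u i = derive1 f u by [].
split.
- rewrite dE; apply: (cvgr_to_ge cr); near=> h.
  have hh : 0 < h by near: h; exact: nbhs_right_gt.
  by rewrite hg //; case: (key h hh).
- case E: (ratio_sup psi i) => [r| |].
  + rewrite lee_fin dE; apply: (cvgr_to_le cr); near=> h.
    have hh : 0 < h by near: h; exact: nbhs_right_gt.
    rewrite hg //; case: (key h hh) => _ h1 h2; apply: (le_trans h1).
    by move: h2; rewrite E lee_fin.
  + exact: leey.
  + exfalso; case: (key 1 ltr01) => _ _; rewrite E leeNy_eq.
    by [].
Unshelve. all: by end_near.
Qed.

Theorem lemma6p7 (R : realType) (I : nat) (psi : 'I_I -> R -> R) :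
  classD1 psi ->
  forall (i : 'I_I) (u : R), 0 <= u ->
    (i.+1)%:R * dpsi psi u i =
    \sum_(j < I) Mstar (dpsi psi u) i j * veff (dpsi psi u) j 0 * dpsi psi u j.
Proof.
move=> hD i u hu.
have hb : forall k, 0 <= dpsi psi u k /\ ((dpsi psi u k)%:E <= ratio_sup psi k)%E.
  by move=> k; exact: rho_bounds.
have r0 : forall k, 0 <= dpsi psi u k by move=> k; case: (hb k).
have S : \sum_(k < I) (k.+1)%:R * dpsi psi u k < 1 / 2.
  case: hD => [[_ _ hsum] _].
  rewrite -lte_fin; apply: le_lt_trans hsum.
  rewrite -sumEFin; apply: lee_sum => k _.
  rewrite EFinM; apply: lee_wpmul2l; first by rewrite lee_fin.
  by case: (hb k).
apply: ident; apply: M_unit => // i0.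
suff : \sum_(k < I) kappa R i0.+1 k.+1 * dpsi psi u k <=
       2 * \sum_(k < I) (k.+1)%:R * dpsi psi u k by lra.
rewrite mulr_sumr; apply: ler_sum => k _; rewrite mulrA.
apply: ler_wpM2r => //; rewrite /kappa ler_pM2l // ler_nat.
exact: geq_minr.
Qed.
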